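(* Let $0<\alpha<2$. There exists $\delta=\delta(\alpha)>0$ (one may take $\delta=\min\{1/4,(3C)^{-1/(1+\alpha)}\}$ with $C=2^{\alpha+1}(1+2\alpha)$) such that the following holds. Let $\rho:\mathbb{R}\to\mathbb{R}$ be a $C^1$, $1$-periodic, even function which is nondecreasing on $[0,1/2]$. For $x\in(0,1/2]$ define $$I(x)=\int_0^x(\rho(y)-\rho(x))\left(\frac{1}{(x+y)^\alpha}+\frac{1}{(x-y)^\alpha}\right)dy,\qquad II_2(x)=\sum_{l=1}^\infty\int_{l-x}^{l+x}(\rho(y)-\rho(x))\left(\frac{1}{(x+y)^\alpha}-\frac{1}{(y-x)^\alpha}\right)dy.$$ Then $I(x)+II_2(x)\le0$ for all $x\in(0,\delta]$. *)

(* Defs.v *)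
From Stdlib Require Import Reals Lra.
Open Scope R_scope.

Definition is_C1 (f : R -> R) : Prop :=
  exists pr : derivable f, continuity (derive f pr).

Definition riemann_int (f : R -> R) (a b v : R) : Prop :=
  exists pr : Riemann_integrable f a b, RiemannInt pr = v.

Definition improper_int_upper (f : R -> R) (a b v : R) : Prop :=
  forall eps, 0 < eps -> exists d, 0 < d /\
    forall e, 0 < e -> e < d -> e < b - a ->
      exists w, riemann_int f a (b - e) w /\ Rabs (w - v) < eps.

Definition integrand_I (alpha : R) (rho : R -> R) (x : R) (y : R) : R :=
  (rho y - rho x) * (1 / Rpower (x + y) alpha + 1 / Rpower (x - y) alpha).

Definition integrand_II2 (alpha : R) (rho : R -> R) (x : R) (y : R) : R :=
  (rho y - rho x) * (1 / Rpower (x + y) alpha - 1 / Rpower (y - x) alpha).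

(* Main.v *)
Require Import Defs.
From Stdlib Require Import Reals.
From Stdlib Require Import Lra FunctionalExtensionality Classical.
From Coquelicot Require Import Coquelicot.
Open Scope R_scope.

Lemma Rpower_pos' u c : 0 < Rpower u c.
Proof. unfold Rpower; apply exp_pos. Qed.

Lemma P_eq u a : 1 / Rpower u a = Rpower u (- a).
Proof. rewrite Rpower_Ropp; unfold Rdiv; ring. Qed.

Lemma P_anti a b c : 0 <= c -> 0 < a <= b -> 1 / Rpower b c <= 1 / Rpower a c.
Proof.
  intros Hc Hab. unfold Rdiv; rewrite !Rmult_1_l.
  apply Rinv_le_contravar; [apply Rpower_pos'| apply Rle_Rpower_l; auto].
Qed.

Lemma P_ge1 u c : 0 <= c -> 0 < u <= 1 -> 1 <= 1 / Rpower u c.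
Proof.
  intros Hc Hu. assert (H := P_anti u 1 c Hc Hu).
  replace (1 / Rpower 1 c) with 1 in H; auto.
  unfold Rpower; rewrite ln_1, Rmult_0_r, exp_0; field.
Qed.

Lemma cont_Rpower g c y : continuity_pt g y -> 0 < g y -> continuity_pt (fun t => Rpower (g t) c) y.
Proof.
  intros Hg Hy.
  apply (continuity_pt_comp g (fun u => Rpower u c)); auto.
  apply derivable_continuous_pt. exists (c * Rpower (g y) (c - 1)).
  apply derivable_pt_lim_power; auto.
Qed.

Lemma cont_P g c y : continuity_pt g y -> 0 < g y -> continuity_pt (fun t => 1 / Rpower (g t) c) y.
Proof.
  intros Hg Hy.
  replace (fun t => 1 / Rpower (g t) c) with (fun t => Rpower (g t) (-c)).
  - apply cont_Rpower; auto.
  - apply functional_extensionality; intro t; rewrite P_eq; auto.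
Qed.

Lemma cont_ex f a b : (forall z, Rmin a b <= z <= Rmax a b -> continuity_pt f z) -> ex_RInt f a b.
Proof.
  intros H; apply (@ex_RInt_continuous R_CompleteNormedModule); intros z Hz; apply continuity_pt_filterlim; auto.
Qed.

Lemma ri_of f a b : ex_RInt f a b -> riemann_int f a b (RInt f a b).
Proof.
  intros H. exists (ex_RInt_Reals_0 f a b H). rewrite (RInt_Reals f a b (ex_RInt_Reals_0 f a b H)); auto.
Qed.

Lemma MVT_P al a b : 0 < a < b -> exists c, a < c < b /\
  1 / Rpower a al - 1 / Rpower b al = al * (b - a) * Rpower c (-(al+1)).
Proof.
  intros [Ha Hab].
  destruct (MVT_cor2 (fun u => Rpower u (-al)) (fun u => (-al) * Rpower u (-al - 1)) a b Hab)
    as [c [Hc1 Hc2]].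
  { intros c Hc. apply derivable_pt_lim_power; lra. }
  exists c; split; auto. rewrite !P_eq.
  replace (-(al+1)) with (-al - 1) by ring. lra.
Qed.

Lemma R_anti c a b : 0 <= c -> 0 < a <= b -> Rpower b (-c) <= Rpower a (-c).
Proof. intros; rewrite <- !P_eq; apply P_anti; auto. Qed.

Lemma scal_R (k r : R) : scal k r = k * r.
Proof. reflexivity. Qed.
Lemma plus_R (k r : R) : plus k r = k + r.
Proof. reflexivity. Qed.
Lemma opp_R (r : R) : opp r = - r.
Proof. reflexivity. Qed.

Lemma kern_eq al x l y : 0 < al -> 0 < x <= 1/4 -> 1 <= l -> l - x <= y <= l + x ->
  exists c, l - 2*x <= c /\
   1 / Rpower (y - x) al - 1 / Rpower (x + y) al = al * (2*x) * Rpower c (-(al+1)).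
Proof.
  intros Hal Hx Hl Hy.
  destruct (MVT_P al (y-x) (x+y)) as [c [Hc E]]; [lra|].
  exists c; split; [lra|]. rewrite E. f_equal. f_equal. ring.
Qed.

Lemma kern_nonneg al x l y : 0 < al -> 0 < x <= 1/4 -> 1 <= l -> l - x <= y <= l + x ->
   0 <= 1 / Rpower (y - x) al - 1 / Rpower (x + y) al.
Proof.
  intros Hal Hx Hl Hy. destruct (kern_eq al x l y) as [c [_ E]]; auto.
  rewrite E. assert (H := Rpower_pos' c (-(al+1))).
  apply Rmult_le_pos; [|lra]. apply Rmult_le_pos; lra.
Qed.

Lemma kern_K0 al x y : 0 < al -> 0 < x <= 1/4 -> 1 - x <= y <= 1 + x ->
   1 / Rpower (y - x) al - 1 / Rpower (x + y) al <= 2 * x * (al * Rpower (1/2) (-(al+1))).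
Proof.
  intros Hal Hx Hy. destruct (kern_eq al x 1 y) as [c [Hc E]]; try lra.
  rewrite E. assert (H := R_anti (al+1) (1/2) c ltac:(lra) ltac:(lra)).
  replace (al * (2 * x) * Rpower c (- (al + 1))) with ((2*x*al) * Rpower c (- (al + 1))) by ring.
  replace (2 * x * (al * Rpower (1 / 2) (- (al + 1)))) with ((2*x*al) * Rpower (1/2) (- (al + 1))) by ring.
  apply Rmult_le_compat_l; auto. apply Rmult_le_pos; lra.
Qed.

Lemma kern_K2 al x l y : 0 < al -> 0 < x <= 1/4 -> 2 <= l -> l - x <= y <= l + x ->
   1 / Rpower (y - x) al - 1 / Rpower (x + y) al <=
   2 * x * (1 / Rpower (l - 3/2) al - 1 / Rpower (l - 1/2) al).
Proof.
  intros Hal Hx Hl Hy. destruct (kern_eq al x l y) as [c [Hc E]]; try lra.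
  destruct (MVT_P al (l-3/2) (l-1/2)) as [c' [Hc' E']]; [lra|].
  rewrite E, E'. assert (H := R_anti (al+1) c' c ltac:(lra) ltac:(lra)).
  replace (al * (2 * x) * Rpower c (- (al + 1))) with ((2*x*al) * Rpower c (- (al + 1))) by ring.
  replace (2 * x * (al * (l - 1 / 2 - (l - 3 / 2)) * Rpower c' (- (al + 1)))) with ((2*x*al) * Rpower c' (- (al + 1))) by field.
  apply Rmult_le_compat_l; auto. apply Rmult_le_pos; lra.
Qed.

Lemma per_nat (rho : R -> R) : (forall y, rho (y + 1) = rho y) -> forall k y, rho (y + INR k) = rho y.
Proof.
  intros Hp k; induction k as [|k IH]; intro y.
  - simpl; rewrite Rplus_0_r; auto.
  - rewrite S_INR. replace (y + (INR k + 1)) with ((y + INR k) + 1) by ring. rewrite Hp; auto.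
Qed.

Lemma rho_le_x (rho : R -> R) x z :
  (forall y, rho (- y) = rho y) ->
  (forall a b, 0 <= a -> a <= b -> b <= 1 / 2 -> rho a <= rho b) ->
  0 < x <= 1/2 -> -x <= z <= x -> rho z <= rho x.
Proof.
  intros He Hm Hx Hz. destruct (Rle_lt_dec 0 z).
  - apply Hm; lra.
  - rewrite <- He. apply Hm; lra.
Qed.

Lemma rho_per_le (rho : R -> R) x n y :
  (forall y, rho (y + 1) = rho y) ->
  (forall y, rho (- y) = rho y) ->
  (forall a b, 0 <= a -> a <= b -> b <= 1 / 2 -> rho a <= rho b) ->
  0 < x <= 1/2 -> INR (S n) - x <= y <= INR (S n) + x -> rho y <= rho x.
Proof.
  intros Hp He Hm Hx Hy.
  replace y with ((y - INR (S n)) + INR (S n)) by ring. rewrite per_nat; auto.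
  apply (rho_le_x rho); auto; lra.
Qed.

Lemma cont_ex_all h a b : continuity h -> ex_RInt h a b.
Proof. intros H; apply cont_ex; intros; apply H. Qed.

Lemma RInt_oppR (f : R -> R) a b : ex_RInt f a b -> RInt (fun y => - f y) a b = - RInt f a b.
Proof. intros H. exact (RInt_opp f a b H). Qed.
Lemma RInt_swapR (f : R -> R) a b : ex_RInt f a b -> - RInt f a b = RInt f b a.
Proof. intros H. exact (opp_RInt_swap f a b H). Qed.

Lemma sym_int (h : R -> R) x n : continuity h -> (forall y, h (y+1) = h y) -> (forall y, h (-y) = h y) ->
  RInt h (INR (S n) - x) (INR (S n) + x) = 2 * RInt h 0 x.
Proof.
  intros Hc Hp He. set (l := INR (S n)).
  assert (E1 := RInt_comp_lin h 1 l (-x) x (cont_ex_all h _ _ Hc)).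
  replace (1 * - x + l) with (l - x) in E1 by ring.
  replace (1 * x + l) with (l + x) in E1 by ring.
  rewrite <- E1.
  rewrite (RInt_ext _ h); [| intros y _; rewrite scal_R; replace (1*y+l) with (y + INR (S n)) by (unfold l; ring); rewrite Rmult_1_l;
     apply (per_nat h Hp)].
  rewrite <- (RInt_Chasles h (-x) 0 x) by apply cont_ex_all, Hc.
  rewrite plus_R.
  assert (E2 := RInt_comp_lin h (-1) 0 0 x (cont_ex_all h _ _ Hc)).
  replace (-1 * 0 + 0) with 0 in E2 by ring.
  replace (-1 * x + 0) with (-x) in E2 by ring.
  rewrite (RInt_ext _ (fun y => - (h y))) in E2;
    [| intros y _; rewrite scal_R; replace (-1*y+0) with (-y) by ring; rewrite He; change (-1 * h y = - h y); ring].
  rewrite RInt_oppR in E2 by apply cont_ex_all, Hc.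
  rewrite <- (RInt_swapR h (-x) 0) in E2 by apply cont_ex_all, Hc.
  lra.
Qed.

Lemma der_pow x c y : y < x -> 0 < c ->
  is_derive (fun y => - Rpower (x - y) c / c) y (Rpower (x-y) (c-1)).
Proof.
  intros Hy Hc.
  assert (D : is_derive (fun u => Rpower u c) (x + - y) (c * Rpower (x + - y) (c - 1))).
  { apply is_derive_Reals, derivable_pt_lim_power; lra. }
  auto_derive.
  - eexists; exact D.
  - replace (Derive (fun x0 : R => Rpower x0 c) (x + - y)) with (c * Rpower (x + - y) (c - 1)) by (symmetry; apply is_derive_unique; exact D). replace (x + - y) with (x - y) by ring. field; lra.
Qed.

Lemma cont_powx x c y : y < x -> continuity_pt (fun y => Rpower (x - y) c) y.
Proof.
  intros Hy. apply (cont_Rpower (fun y => x - y)); [|lra].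
  apply continuity_pt_minus; [apply continuity_pt_const; intros ? ?; auto | apply continuity_pt_id].
Qed.

Lemma ex_powx x c a b : a <= b < x -> ex_RInt (fun y => Rpower (x - y) c) a b.
Proof.
  intros H. apply cont_ex. intros z Hz. rewrite Rmax_right in Hz by lra. apply cont_powx; lra.
Qed.

Lemma int_pow_bound x e c : 0 < e < x -> 0 < c ->
  RInt (fun y => Rpower (x - y) (c - 1)) 0 (x - e) <= Rpower x c / c.
Proof.
  intros He Hc.
  assert (I : is_RInt (fun y => Rpower (x - y) (c - 1)) 0 (x - e)
     (minus (- Rpower (x - (x - e)) c / c) (- Rpower (x - 0) c / c))).
  { apply (is_RInt_derive (fun y => - Rpower (x - y) c / c)).
    - intros y Hy. rewrite Rmin_left, Rmax_right in Hy by lra. apply der_pow; lra.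
    - intros y Hy. rewrite Rmin_left, Rmax_right in Hy by lra.
      apply continuity_pt_filterlim, cont_powx; lra. }
  rewrite (is_RInt_unique _ _ _ _ I).
  change (minus ?a ?b) with (a - b).
  replace (x - 0) with x by ring.
  assert (H := Rpower_pos' (x - (x - e)) c).
  assert (0 < Rpower (x - (x - e)) c / c) by (apply Rdiv_lt_0_compat; lra).
  lra.
Qed.

Lemma cont_lin (a s : R) y : continuity_pt (fun t => a + s * t) y.
Proof.
  apply (continuity_pt_plus (fun _ => a) (fun t => s * t)).
  - apply continuity_pt_const; intros ? ?; auto.
  - apply (continuity_pt_mult (fun _ => s) (fun t => t)).
    + apply continuity_pt_const; intros ? ?; auto.
    + apply continuity_pt_id.
Qed.

Lemma cont_I al rho x y : continuity rho -> -x < y < x ->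
  continuity_pt (integrand_I al rho x) y.
Proof.
  intros Hr Hy. unfold integrand_I.
  apply (continuity_pt_mult (fun y => rho y - rho x)
     (fun y => 1 / Rpower (x + y) al + 1 / Rpower (x - y) al)).
  - apply (continuity_pt_minus rho (fun _ => rho x)); auto.
    apply continuity_pt_const; intros ? ?; auto.
  - apply (continuity_pt_plus (fun y => 1 / Rpower (x + y) al) (fun y => 1 / Rpower (x - y) al)).
    + apply (cont_P (fun y => x + y)); [|cbv beta; lra].
      replace (fun y => x + y) with (fun t => x + 1 * t) by (apply functional_extensionality; intro; ring).
      apply cont_lin.
    + apply (cont_P (fun y => x - y)); [|cbv beta; lra].
      replace (fun y => x - y) with (fun t => x + -1 * t) by (apply functional_extensionality; intro; ring).
      apply cont_lin.
Qed.

Lemma cont_II2 al rho x y : continuity rho -> 0 < x < y ->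
  continuity_pt (integrand_II2 al rho x) y.
Proof.
  intros Hr Hy. unfold integrand_II2.
  apply (continuity_pt_mult (fun y => rho y - rho x)
     (fun y => 1 / Rpower (x + y) al - 1 / Rpower (y - x) al)).
  - apply (continuity_pt_minus rho (fun _ => rho x)); auto.
    apply continuity_pt_const; intros ? ?; auto.
  - apply (continuity_pt_minus (fun y => 1 / Rpower (x + y) al) (fun y => 1 / Rpower (y - x) al)).
    + apply (cont_P (fun y => x + y)); [|cbv beta; lra].
      replace (fun y => x + y) with (fun t => x + 1 * t) by (apply functional_extensionality; intro; ring).
      apply cont_lin.
    + apply (cont_P (fun y => y - x)); [|cbv beta; lra].
      replace (fun y => y - x) with (fun t => -x + 1 * t) by (apply functional_extensionality; intro; ring).
      apply cont_lin.
Qed.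

Lemma ex_I al rho x a b : continuity rho -> 0 <= a <= b -> b < x -> ex_RInt (integrand_I al rho x) a b.
Proof.
  intros Hr Hab Hb. apply cont_ex. intros z Hz. rewrite Rmin_left, Rmax_right in Hz by lra.
  apply cont_I; auto; lra.
Qed.

Lemma ex_II2 al rho x a b : continuity rho -> 0 < x < a -> a <= b -> ex_RInt (integrand_II2 al rho x) a b.
Proof.
  intros Hr Hx Hab. apply cont_ex. intros z Hz. rewrite Rmin_left, Rmax_right in Hz by lra.
  apply cont_II2; auto; lra.
Qed.

Lemma cont_h rho x : continuity rho -> continuity (fun y => rho x - rho y).
Proof.
  intros Hr y. apply (continuity_pt_minus (fun _ => rho x) rho); auto.
  apply continuity_pt_const; intros ? ?; auto.
Qed.

Lemma I_le0 al rho x y : 0 < al ->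
  rho y <= rho x -> -x < y < x -> integrand_I al rho x y <= 0.
Proof.
  intros Hal Hr Hy. unfold integrand_I.
  assert (A := Rpower_pos' (x + y) al). assert (B := Rpower_pos' (x - y) al).
  assert (0 < 1 / Rpower (x + y) al) by (apply Rdiv_lt_0_compat; lra).
  assert (0 < 1 / Rpower (x - y) al) by (apply Rdiv_lt_0_compat; lra).
  apply Rmult_le_0_r; lra.
Qed.

Lemma I_le_h al rho x y : 0 < al -> 0 < x <= 1/4 ->
  rho y <= rho x -> 0 <= y < x -> integrand_I al rho x y <= rho y - rho x.
Proof.
  intros Hal Hx Hr Hy. unfold integrand_I.
  assert (A := P_ge1 (x + y) al ltac:(lra) ltac:(lra)). assert (B := Rpower_pos' (x - y) al).
  assert (0 < 1 / Rpower (x - y) al) by (apply Rdiv_lt_0_compat; lra).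
  set (p := 1 / Rpower (x + y) al) in *. set (q := 1 / Rpower (x - y) al) in *.
  assert (0 <= (rho x - rho y) * (p + q - 1)) by (apply Rmult_le_pos; lra).
  nra.
Qed.

Lemma I_ge al rho x y L : 0 < al ->
  0 <= rho x - rho y <= L * (x - y) -> 0 <= y < x ->
  - (2 * L) * Rpower (x - y) (1 - al) <= integrand_I al rho x y.
Proof.
  intros Hal Hr Hy. unfold integrand_I.
  assert (E : Rpower (x - y) (1 - al) = (x - y) * (1 / Rpower (x - y) al)).
  { replace (1 - al) with (1 + - al) by ring. rewrite Rpower_plus, Rpower_1 by lra.
    rewrite P_eq; auto. }
  rewrite E.
  assert (A := P_anti (x - y) (x + y) al ltac:(lra) ltac:(lra)).
  assert (B := Rpower_pos' (x + y) al).
  assert (0 < 1 / Rpower (x + y) al) by (apply Rdiv_lt_0_compat; lra).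
  set (p := 1 / Rpower (x + y) al) in *. set (q := 1 / Rpower (x - y) al) in *.
  set (d := rho x - rho y) in *.
  assert (d * (p + q) <= L * (x - y) * (2 * q)).
  { apply Rmult_le_compat; lra. }
  replace ((rho y - rho x) * (p + q)) with (- (d * (p+q))) by (unfold d; ring).
  lra.
Qed.

Lemma II2_eq al rho x y : integrand_II2 al rho x y =
   (rho x - rho y) * (1 / Rpower (y - x) al - 1 / Rpower (x + y) al).
Proof. unfold integrand_II2; ring. Qed.

Lemma RInt_scalR (f : R -> R) a b k : ex_RInt f a b -> RInt (fun y => k * f y) a b = k * RInt f a b.
Proof. intros H. exact (RInt_scal f a b k H). Qed.
Lemma ex_RInt_scalR (f : R -> R) a b k : ex_RInt f a b -> ex_RInt (fun y => k * f y) a b.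
Proof. intros H. exact (ex_RInt_scal f a b k H). Qed.
Lemma RInt_constR a b (c : R) : RInt (fun _ => c) a b = (b - a) * c.
Proof. exact (RInt_const a b c). Qed.
Lemma ex_RInt_constR a b (c : R) : ex_RInt (fun _ => c) a b.
Proof. exact (ex_RInt_const a b c). Qed.
Lemma RInt_ChaslesR (f : R -> R) a b c : ex_RInt f a b -> ex_RInt f b c ->
  RInt f a b + RInt f b c = RInt f a c.
Proof. intros. exact (RInt_Chasles f a b c H H0). Qed.

Lemma vI_ex al rho x L : 0 < al < 2 -> continuity rho -> 0 < x <= 1/4 ->
  (forall y, 0 <= y <= x -> rho y <= rho x) ->
  (forall y, 0 <= y <= x -> rho 0 <= rho y) ->
  (forall y, 0 <= y <= x -> rho x - rho y <= L * (x - y)) ->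
  exists vI, improper_int_upper (integrand_I al rho x) 0 x vI /\
    vI <= - RInt (fun y => rho x - rho y) 0 x.
Proof.
  intros Hal Hr Hx Hmx Hm0 HL.
  set (fI := integrand_I al rho x).
  set (F := fun e => RInt fI 0 (x - e)).
  set (h := fun y => rho x - rho y).
  set (G := RInt h 0 x).
  set (B := rho x - rho 0).
  assert (HL0 : 0 <= L).
  { assert (H1 := HL 0 ltac:(lra)). assert (H2 := Hm0 x ltac:(lra)).
    destruct (Rle_lt_dec 0 L); auto. nra. }
  assert (HB : 0 <= B) by (unfold B; assert (H2 := Hm0 x ltac:(lra)); lra).
  assert (exh : forall a b, ex_RInt h a b) by (intros; apply cont_ex_all, cont_h, Hr).
  assert (Fmono : forall e1 e2, 0 < e1 <= e2 -> e2 < x -> F e1 <= F e2).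
  { intros e1 e2 H1 H2. unfold F.
    rewrite <- (RInt_ChaslesR fI 0 (x - e2) (x - e1)) by (apply ex_I; auto; lra).
    assert (RInt fI (x - e2) (x - e1) <= RInt (fun _ => 0) (x - e2) (x - e1)).
    { apply RInt_le; [lra| apply ex_I; auto; lra | apply ex_RInt_constR |].
      intros y Hy. apply I_le0; [lra| apply Hmx; lra | lra]. }
    rewrite RInt_constR in H. lra. }
  set (M := 2 * L * (Rpower x (2 - al) / (2 - al))).
  assert (Flow : forall e, 0 < e < x -> - M <= F e).
  { intros e He. unfold F.
    assert (A : RInt (fun y => - (2 * L) * Rpower (x - y) (1 - al)) 0 (x - e) <= RInt fI 0 (x - e)).
    { apply RInt_le; [lra| apply ex_RInt_scalR, ex_powx; lra | apply ex_I; auto; lra |].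
      intros y Hy. apply I_ge; [lra| |lra]. split; [assert (H := Hmx y ltac:(lra)); lra| apply HL; lra]. }
    rewrite RInt_scalR in A by (apply ex_powx; lra).
    assert (Bd := int_pow_bound x e (2 - al) He ltac:(lra)).
    replace (2 - al - 1) with (1 - al) in Bd by ring.
    unfold M. nra. }
  assert (Fup : forall e, 0 < e < x -> F e <= - G + e * B).
  { intros e He. unfold F.
    assert (A : RInt fI 0 (x - e) <= RInt (fun y => - h y) 0 (x - e)).
    { apply RInt_le; [lra| apply ex_I; auto; lra | apply (ex_RInt_ext (fun y => -1 * h y)); [intros; cbv beta; change (-1 * h x0 = - h x0); ring | apply ex_RInt_scalR, exh] |].
      intros y Hy. unfold h. replace (- (rho x - rho y)) with (rho y - rho x) by ring. apply I_le_h; [lra|lra| apply Hmx; lra | lra]. }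
    rewrite RInt_oppR in A by auto.
    assert (C := RInt_ChaslesR h 0 (x - e) x (exh _ _) (exh _ _)).
    assert (D : RInt h (x - e) x <= RInt (fun _ => B) (x - e) x).
    { apply RInt_le; [lra| auto | apply ex_RInt_constR |].
      intros y Hy. unfold h, B. assert (H := Hm0 y ltac:(lra)). lra. }
    rewrite RInt_constR in D. unfold G. replace (x - (x - e)) with e in D by ring. lra. }
  set (E := fun r => exists e, 0 < e < x /\ r = - F e).
  destruct (completeness E) as [m [Hub Hlub]].
  { exists M. intros r [e [He ->]]. assert (H := Flow e He). lra. }
  { exists (- F (x/2)). exists (x/2); split; auto; lra. }
  exists (- m). split.
  - intros eps Heps.
    destruct (classic (exists e0, 0 < e0 < x /\ m - eps < - F e0)) as [[e0 [He0 Hlt]] | Hn].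
    + exists e0; split; [lra|]. intros e He1 He2 He3.
      exists (F e); split.
      * apply ri_of, ex_I; auto; lra.
      * assert (H1 : - F e <= m) by (apply Hub; exists e; split; auto; lra).
        assert (H2 := Fmono e e0 ltac:(lra) ltac:(lra)).
        apply Rabs_def1; lra.
    + exfalso. assert (m <= m - eps); [|lra].
      apply Hlub. intros r [e [He ->]]. destruct (Rle_lt_dec (- F e) (m - eps)); auto.
      exfalso; apply Hn; exists e; split; auto.
  - fold G. destruct (Rle_lt_dec (- m) (- G)) as [|Hc]; auto. exfalso.
    set (Dd := - m + G).
    set (e := Rmin (x/2) (Dd / (2 * (B + 1)))).
    assert (He1 : 0 < e).
    { unfold e. apply Rmin_glb_lt; [lra|]. apply Rdiv_lt_0_compat; unfold Dd; lra. }
    assert (He2 : e <= x / 2) by apply Rmin_l.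
    assert (He3 : e * (B + 1) <= Dd / 2).
    { apply Rle_trans with (Dd / (2 * (B + 1)) * (B + 1)).
      - apply Rmult_le_compat_r; [lra| apply Rmin_r].
      - right. field. lra. }
    assert (H1 : - F e <= m) by (apply Hub; exists e; split; auto; lra).
    assert (H2 := Fup e ltac:(lra)).
    unfold Dd in He3. nra.
Qed.

Lemma vII_ex al rho x :
  0 < al < 2 -> continuity rho -> 0 < x <= 1/4 ->
  (forall y, rho (y + 1) = rho y) ->
  (forall y, rho (- y) = rho y) ->
  (forall a b, 0 <= a -> a <= b -> b <= 1 / 2 -> rho a <= rho b) ->
  4 * x * (al * Rpower (1/2) (-(al+1)) + 1 / Rpower (1/2) al) <= 1 ->
  exists (vII : R) (a : nat -> R),
    (forall n : nat, riemann_int (integrand_II2 al rho x) (INR (S n) - x) (INR (S n) + x) (a n)) /\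
    infinite_sum a vII /\ vII <= RInt (fun y => rho x - rho y) 0 x.
Proof.
  intros Hal Hr Hx Hp He Hm Hsmall.
  set (fII := integrand_II2 al rho x).
  set (h := fun y => rho x - rho y).
  set (G := RInt h 0 x).
  set (K1 := al * Rpower (1/2) (-(al+1))).
  set (K2 := 1 / Rpower (1/2) al).
  set (P := fun u => 1 / Rpower u al).
  set (a := fun n => RInt fII (INR (S n) - x) (INR (S n) + x)).
  assert (exh : forall a b, ex_RInt h a b) by (intros; apply cont_ex_all, cont_h, Hr).
  assert (Hl1 : forall n, 1 <= INR (S n)) by (intro n; rewrite S_INR; assert (H := pos_INR n); lra).
  assert (exII : forall n, ex_RInt fII (INR (S n) - x) (INR (S n) + x)).
  { intro n. apply ex_II2; auto; try lra. specialize (Hl1 n); lra. }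
  assert (hpos : forall n y, INR (S n) - x <= y <= INR (S n) + x -> 0 <= h y).
  { intros n y Hy. unfold h. assert (H := rho_per_le rho x n y Hp He Hm ltac:(lra) Hy). lra. }
  assert (Gpos : 0 <= G).
  { unfold G. apply Rle_trans with (RInt (fun _ => 0) 0 x); [rewrite RInt_constR; lra|].
    apply RInt_le; [lra | apply ex_RInt_constR | auto |].
    intros y Hy. unfold h. assert (H := rho_le_x rho x y He Hm ltac:(lra) ltac:(lra)). lra. }
  assert (anonneg : forall n, 0 <= a n).
  { intro n. unfold a. apply Rle_trans with (RInt (fun _ => 0) (INR (S n) - x) (INR (S n) + x)); [rewrite RInt_constR; lra|].
    apply RInt_le; [lra | apply ex_RInt_constR | auto |].
    intros y Hy. unfold fII. rewrite II2_eq. apply Rmult_le_pos.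
    - apply (hpos n y); lra.
    - apply (kern_nonneg al x (INR (S n))); auto; lra. }
  assert (ale : forall n E, (forall y, INR (S n) - x <= y <= INR (S n) + x ->
        1 / Rpower (y - x) al - 1 / Rpower (x + y) al <= 2 * x * E) -> a n <= 2 * x * E * (2 * G)).
  { intros n E HE. unfold a.
    apply Rle_trans with (RInt (fun y => (2 * x * E) * h y) (INR (S n) - x) (INR (S n) + x)).
    - apply RInt_le; [lra | auto | apply ex_RInt_scalR; auto |].
      intros y Hy. unfold fII. rewrite II2_eq. rewrite Rmult_comm.
      apply Rmult_le_compat_r; [apply (hpos n y); lra | apply HE; lra].
    - rewrite RInt_scalR by auto. unfold G, h. rewrite (sym_int (fun y => rho x - rho y)).
      + lra.
      + apply cont_h, Hr.
      + intros y; rewrite Hp; auto.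
      + intros y; rewrite He; auto. }
  assert (Psum : forall N, sum_f_R0 a N <= 4 * x * G * (K1 + K2 - P (INR N + 1/2))).
  { induction N as [|N IH].
    - simpl. replace (0 + 1/2) with (1/2) by ring. fold K2. unfold P; fold K2.
      replace (4 * x * G * (K1 + K2 - K2)) with (2 * x * K1 * (2 * G)) by ring.
      apply ale. intros y Hy. unfold K1. apply kern_K0; auto. simpl in Hy; lra.
    - rewrite tech5.
      assert (A : a (S N) <= 2 * x * (P (INR N + 1/2) - P (INR (S N) + 1/2)) * (2 * G)).
      { apply ale. intros y Hy. unfold P.
        replace (INR N + 1/2) with (INR (S (S N)) - 3/2) by (rewrite !S_INR; field).
        replace (INR (S N) + 1/2) with (INR (S (S N)) - 1/2) by (rewrite !S_INR; field).
        apply kern_K2; [lra|lra| |exact Hy]. rewrite !S_INR; assert (H := pos_INR N); lra. }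
      lra. }
  assert (HK : 0 <= K1 + K2).
  { unfold K1, K2. assert (H1 := Rpower_pos' (1/2) (-(al+1))). assert (H2 := Rpower_pos' (1/2) al).
    assert (0 < 1 / Rpower (1/2) al) by (apply Rdiv_lt_0_compat; lra). nra. }
  assert (Sb : forall N, sum_f_R0 a N <= G).
  { intro N. assert (H := Psum N).
    assert (HP : 0 <= P (INR N + 1/2)).
    { unfold P. assert (H2 := Rpower_pos' (INR N + 1/2) al). left; apply Rdiv_lt_0_compat; lra. }
    fold K1 K2 in Hsmall.
    assert (4 * x * G * (K1 + K2 - P (INR N + 1 / 2)) <= 4 * x * G * (K1 + K2)).
    { apply Rmult_le_compat_l; [apply Rmult_le_pos; lra | lra]. }
    assert (4 * x * G * (K1 + K2) <= G * 1).
    { replace (4 * x * G * (K1 + K2)) with (G * (4 * x * (K1 + K2))) by ring.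
      apply Rmult_le_compat_l; lra. }
    lra. }
  destruct (growing_cv (sum_f_R0 a)) as [vII Hcv].
  { intro n. simpl. assert (H := anonneg (S n)). lra. }
  { exists G. intros r [i ->]. auto. }
  exists vII, a. split; [|split].
  - intro n. apply ri_of, exII.
  - exact Hcv.
  - destruct (Rle_lt_dec vII G) as [|Hc]; auto. exfalso.
    destruct (Hcv (vII - G) ltac:(lra)) as [N HN].
    specialize (HN N (Nat.le_refl N)). unfold R_dist in HN.
    apply Rabs_def2 in HN. specialize (Sb N). lra.
Qed.

Theorem lemma2p5 (alpha : R) (halpha : 0 < alpha < 2) :
  exists delta : R, 0 < delta /\
  forall rho : R -> R,
    is_C1 rho ->
    (forall y, rho (y + 1) = rho y) ->
    (forall y, rho (- y) = rho y) ->
    (forall a b, 0 <= a -> a <= b -> b <= 1 / 2 -> rho a <= rho b) ->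
    forall x, 0 < x -> x <= delta ->
      exists (vI vII : R) (a : nat -> R),
        improper_int_upper (integrand_I alpha rho x) 0 x vI /\
        (forall n : nat,
            riemann_int (integrand_II2 alpha rho x)
              (INR (S n) - x) (INR (S n) + x) (a n)) /\
        infinite_sum a vII /\
        vI + vII <= 0.
Proof.
  set (c := alpha * Rpower (1/2) (-(alpha+1)) + 1 / Rpower (1/2) alpha).
  assert (Hc : 0 <= c).
  { unfold c. assert (H1 := Rpower_pos' (1/2) (-(alpha+1))). assert (H2 := Rpower_pos' (1/2) alpha).
    assert (0 < 1 / Rpower (1/2) alpha) by (apply Rdiv_lt_0_compat; lra). nra. }
  exists (Rmin (1/4) (1 / (4 * c + 1))). split.
  { apply Rmin_glb_lt; [lra|]. apply Rdiv_lt_0_compat; lra. }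
  intros rho [pr Hdc] Hp He Hm x Hx Hxd.
  assert (Hx4 : x <= 1/4) by (apply Rle_trans with (1 := Hxd); apply Rmin_l).
  assert (Hx2 : x <= 1 / (4 * c + 1)) by (apply Rle_trans with (1 := Hxd); apply Rmin_r).
  assert (Hsmall : 4 * x * c <= 1).
  { apply Rle_trans with (4 * c * (1 / (4 * c + 1))).
    - replace (4 * x * c) with (4 * c * x) by ring. apply Rmult_le_compat_l; lra.
    - replace (4 * c * (1 / (4 * c + 1))) with (1 - 1 / (4 * c + 1)) by (field; lra).
      assert (0 < 1 / (4 * c + 1)) by (apply Rdiv_lt_0_compat; lra). lra. }
  assert (Hr : continuity rho) by (apply derivable_continuous; exact pr).
  destruct (continuity_ab_maj (fun t => Rabs (derive rho pr t)) 0 (1/2)) as [Mx [HMx _]].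
  { lra. }
  { intros t _. apply (continuity_pt_comp (derive rho pr) Rabs); [apply Hdc | apply Rcontinuity_abs]. }
  set (L := Rabs (derive rho pr Mx)).
  assert (HL : forall y, 0 <= y <= x -> rho x - rho y <= L * (x - y)).
  { intros y Hy. destruct (Req_dec y x) as [->|Hne]; [lra|].
    destruct (MVT_cor1 rho y x pr ltac:(lra)) as [t [Et Ht]].
    rewrite Et. apply Rmult_le_compat_r; [lra|].
    apply Rle_trans with (Rabs (derive_pt rho t (pr t))); [apply Rle_abs|].
    apply (HMx t); lra. }
  destruct (vI_ex alpha rho x L halpha Hr ltac:(lra)) as [vI [HI HvI]].
  { intros y Hy. apply Hm; lra. }
  { intros y Hy. apply Hm; lra. }
  { exact HL. }
  destruct (vII_ex alpha rho x halpha Hr ltac:(lra) Hp He Hm Hsmall) as [vII [a [Ha [Hs HvII]]]].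
  exists vI, vII, a. split; [|split; [|split]]; auto. lra.
Qed.
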